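(* The class $\mathcal{P}$ of positive MV-algebras is not closed under homomorphic images, hence is not a variety. Specifically, let $\mathbf{C}$ be the Chang MV-algebra with least positive infinitesimal $\epsilon$, and let $\mathbf{C}'$ be the subset $\{0,\epsilon,2\epsilon,\dots\}\cup\{1\}$, which is closed under $\oplus,\odot,\vee,\wedge,0,1$; the equivalence relation $\theta$ on $\mathbf{C}'$ with classes $\{0\}$, $\{n\epsilon\mid n\ge 1\}$, $\{1\}$ is a congruence of $\mathbf{C}'$, and $\mathbf{C}'/\theta$ is not a positive MV-algebra.
   Context: A \emph{positive MV-algebra} is an algebra of type $\{\oplus,\odot,\vee,\wedge,0,1\}$ isomorphic to a subalgebra of the $\{\oplus,\odot,\vee,\wedge,0,1\}$-reduct of some MV-algebra, where MV-algebras are taken with the derived operations $1=\neg 0$, $x\odot y=\neg(\neg x\oplus\neg y)$, $x\vee y=(x\odot\neg y)\oplus y$, $x\wedge y=\neg(\neg x\vee\neg y)$. The Chang algebra $\mathbf{C}$ has universe $\{n\epsilon\mid n\in\mathbb{N}\}\cup\{1-n\epsilon\mid n\in\mathbb{N}\}$, realized as $\Gamma(\mathbb{Z}\times_{\mathrm{lex}}\mathbb{Z},(1,0))$ with $\epsilon=(0,1)$. *)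

(* Defs.v *)
From mathcomp Require Import all_boot all_order all_algebra.
Set Implicit Arguments. Unset Strict Implicit. Unset Printing Implicit Defensive.
Import Order.TTheory GRing.Theory Num.Theory.

Record mv_sig (A : Type) := MvSig {
  mv_oplus : A -> A -> A; mv_neg : A -> A; mv_zero : A }.

Definition MV_axioms (A : Type) (s : mv_sig A) : Prop :=
  let op := mv_oplus s in let ng := mv_neg s in let z := mv_zero s in
  (forall x y w, op x (op y w) = op (op x y) w)
  /\ (forall x y, op x y = op y x)
  /\ (forall x, op x z = x)
  /\ (forall x, ng (ng x) = x)
  /\ (forall x, op x (ng z) = ng z)
  /\ (forall x y, op (ng (op (ng x) y)) y = op (ng (op (ng y) x)) x).

Record mvAlgebra := MvAlgebra {
  mv_car :> Type; mv_ops : mv_sig mv_car; mv_ax : MV_axioms mv_ops }.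

Record pos_sig (A : Type) := PosSig {
  p_oplus : A -> A -> A; p_odot : A -> A -> A;
  p_join : A -> A -> A; p_meet : A -> A -> A; p_zero : A; p_one : A }.

Definition mv_one A (s : mv_sig A) := mv_neg s (mv_zero s).
Definition mv_odot A (s : mv_sig A) x y :=
  mv_neg s (mv_oplus s (mv_neg s x) (mv_neg s y)).
Definition mv_join A (s : mv_sig A) x y := mv_oplus s (mv_odot s x (mv_neg s y)) y.
Definition mv_meet A (s : mv_sig A) x y :=
  mv_neg s (mv_join s (mv_neg s x) (mv_neg s y)).

Definition reduct A (s : mv_sig A) : pos_sig A :=
  PosSig (mv_oplus s) (mv_odot s) (mv_join s) (mv_meet s) (mv_zero s) (mv_one s).

Definition pos_hom A B (s : pos_sig A) (t : pos_sig B) (f : A -> B) : Prop :=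
  (forall x y, f (p_oplus s x y) = p_oplus t (f x) (f y))
  /\ (forall x y, f (p_odot s x y) = p_odot t (f x) (f y))
  /\ (forall x y, f (p_join s x y) = p_join t (f x) (f y))
  /\ (forall x y, f (p_meet s x y) = p_meet t (f x) (f y))
  /\ f (p_zero s) = p_zero t
  /\ f (p_one s) = p_one t.

(* positive MV-algebra: isomorphic to a subalgebra of the reduct of an MV-algebra,
   i.e. embeds injectively and homomorphically into such a reduct *)
Definition is_positive A (s : pos_sig A) : Prop :=
  exists (M : mvAlgebra) (f : A -> M), injective f /\ pos_hom s (reduct (mv_ops M)) f.

Definition pos_congruence A (s : pos_sig A) (th : A -> A -> Prop) : Prop :=
  (forall x, th x x) /\ (forall x y, th x y -> th y x)
  /\ (forall x y w, th x y -> th y w -> th x w)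
  /\ (forall x x' y y', th x x' -> th y y' -> th (p_oplus s x y) (p_oplus s x' y'))
  /\ (forall x x' y y', th x x' -> th y y' -> th (p_odot s x y) (p_odot s x' y'))
  /\ (forall x x' y y', th x x' -> th y y' -> th (p_join s x y) (p_join s x' y'))
  /\ (forall x x' y y', th x x' -> th y y' -> th (p_meet s x y) (p_meet s x' y')).

(* ---------- The Chang algebra C = Gamma(Z x_lex Z, (1,0)) ---------- *)
(* Eps n stands for n*eps = (0,n);  OneMinus n stands for 1 - n*eps = (1,-n).
   This is a bijective encoding of the interval [(0,0),(1,0)] of Z x_lex Z. *)
Inductive chang := Eps of nat | OneMinus of nat.

Local Open Scope ring_scope.

Definition chang_val (x : chang) : int * int :=
  match x with Eps n => (0, n%:Z) | OneMinus n => (1, - n%:Z) end.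

Definition lex_le (p q : int * int) : bool :=
  (p.1 < q.1) || ((p.1 == q.1) && (p.2 <= q.2)).

Definition lex_trunc (p : int * int) : int * int :=
  if lex_le (1, 0) p then (1, 0) else if lex_le p (0, 0) then (0, 0) else p.

Definition chang_of (p : int * int) : chang :=
  if p.1 == 1 then OneMinus `|p.2|%N else Eps `|p.2|%N.

Definition chang_oplus (x y : chang) : chang :=
  chang_of (lex_trunc ((chang_val x).1 + (chang_val y).1,
                        (chang_val x).2 + (chang_val y).2)).
Definition chang_neg (x : chang) : chang :=
  chang_of (1 - (chang_val x).1, 0 - (chang_val x).2).

Definition chang_sig : mv_sig chang := MvSig chang_oplus chang_neg (Eps 0).
Definition chang_pos : pos_sig chang := reduct chang_sig.

Definition in_Cp (x : chang) : bool :=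
  match x with Eps _ => true | OneMinus n => n == 0%N end.

Definition Cp := {x : chang | in_Cp x}.
Definition Cp0 : Cp := exist _ (Eps 0) isT.
Definition Cp1 : Cp := exist _ (OneMinus 0) isT.
(* restriction of the operations of C to C' (closure is asserted in the theorem) *)
Definition Cp_lift (x : chang) : Cp := insubd Cp0 x.
Definition Cp_pos : pos_sig Cp :=
  PosSig (fun x y => Cp_lift (p_oplus chang_pos (val x) (val y)))
         (fun x y => Cp_lift (p_odot chang_pos (val x) (val y)))
         (fun x y => Cp_lift (p_join chang_pos (val x) (val y)))
         (fun x y => Cp_lift (p_meet chang_pos (val x) (val y)))
         Cp0 Cp1.

Definition theta (x y : Cp) : Prop :=
  (val x = Eps 0 /\ val y = Eps 0)
  \/ (exists n m, (0 < n)%N /\ (0 < m)%N /\ val x = Eps n /\ val y = Eps m)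
  \/ (val x = OneMinus 0 /\ val y = OneMinus 0).

(* ---------- the quotient C'/theta, one element per class ---------- *)
Inductive Cq := Q0 | Qe | Q1.

Definition Cq_pi (x : Cp) : Cq :=
  match val x with Eps 0 => Q0 | Eps _ => Qe | OneMinus _ => Q1 end.

Definition Cq_rep (q : Cq) : Cp :=
  match q with Q0 => Cp0 | Qe => exist _ (Eps 1) isT | Q1 => Cp1 end.

Definition Cq_pos : pos_sig Cq :=
  PosSig (fun q r => Cq_pi (p_oplus Cp_pos (Cq_rep q) (Cq_rep r)))
         (fun q r => Cq_pi (p_odot Cp_pos (Cq_rep q) (Cq_rep r)))
         (fun q r => Cq_pi (p_join Cp_pos (Cq_rep q) (Cq_rep r)))
         (fun q r => Cq_pi (p_meet Cp_pos (Cq_rep q) (Cq_rep r)))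
         Q0 Q1.

(* Main.v *)
Require Import Defs.
From mathcomp Require Import all_boot all_order all_algebra zify.
Import Order.TTheory GRing.Theory Num.Theory.
Local Open Scope ring_scope.

Ltac crunch := rewrite /chang_oplus /chang_neg /lex_trunc /lex_le /chang_of /=;
  repeat match goal with
  | |- context[if ?c then _ else _] => let E := fresh "E" in destruct c eqn:E; simpl in *
  | H : context[if ?c then _ else _] |- _ => let E := fresh "E" in destruct c eqn:E; simpl in * end;
  try (exfalso; lia); try (congr Eps; lia); try (congr OneMinus; lia).

Lemma oEE a b : chang_oplus (Eps a) (Eps b) = Eps (a + b)%N.
Proof. crunch. Qed.
Lemma oEO a b : chang_oplus (Eps a) (OneMinus b) = OneMinus (b - a)%N.
Proof. crunch. Qed.
Lemma oOE a b : chang_oplus (OneMinus b) (Eps a) = OneMinus (b - a)%N.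
Proof. crunch. Qed.
Lemma oOO a b : chang_oplus (OneMinus a) (OneMinus b) = OneMinus 0.
Proof. crunch. Qed.
Lemma nE n : chang_neg (Eps n) = OneMinus n.
Proof. crunch. Qed.
Lemma nO n : chang_neg (OneMinus n) = Eps n.
Proof. crunch. Qed.

Definition cneg' x := match x with Eps n => OneMinus n | OneMinus n => Eps n end.
Definition coplus' x y := match x, y with
  | Eps a, Eps b => Eps (a + b)%N
  | Eps a, OneMinus b => OneMinus (b - a)%N
  | OneMinus b, Eps a => OneMinus (b - a)%N
  | _, _ => OneMinus 0 end.
From Stdlib Require Import FunctionalExtensionality.
Lemma negE x : chang_neg x = cneg' x.
Proof. by case: x => n; rewrite ?nE ?nO. Qed.
Lemma oplusE x y : chang_oplus x y = coplus' x y.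
Proof. by case: x => a; case: y => b; rewrite ?oEE ?oEO ?oOE ?oOO. Qed.
Definition sig' := MvSig coplus' cneg' (Eps 0).
Lemma sigE : chang_sig = sig'.
Proof.
rewrite /chang_sig /sig'; congr MvSig.
  by apply: functional_extensionality => x; apply: functional_extensionality => y; apply: oplusE.
by apply: functional_extensionality => x; apply: negE.
Qed.
Ltac fin := first [reflexivity | (congr Eps; lia) | (congr OneMinus; lia)].

Lemma mv_ax_chang : MV_axioms chang_sig.
Proof.
rewrite sigE /MV_axioms /=.
split; first by move=> [] a [] b [] c /=; fin.
split; first by move=> [] a [] b /=; fin.
split; first by move=> [] a /=; fin.
split; first by move=> [] a.
split; first by move=> [] a.
by move=> [] a [] b /=; fin.
Qed.

Ltac unf := rewrite /= /mv_odot /mv_join /mv_meet /mv_one /=.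

Lemma closure' x y : in_Cp x -> in_Cp y ->
     [/\ in_Cp (p_oplus (reduct sig') x y), in_Cp (p_odot (reduct sig') x y),
         in_Cp (p_join (reduct sig') x y) & in_Cp (p_meet (reduct sig') x y)].
Proof.
unf; move: x y => [] a [] b /= Ha Hb; rewrite ?(eqP Ha) ?(eqP Hb) /=; split => //; lia.
Qed.

Lemma closure : in_Cp (p_zero chang_pos) /\ in_Cp (p_one chang_pos) /\
   forall x y, in_Cp x -> in_Cp y ->
     [/\ in_Cp (p_oplus chang_pos x y), in_Cp (p_odot chang_pos x y),
         in_Cp (p_join chang_pos x y) & in_Cp (p_meet chang_pos x y)].
Proof.
rewrite /chang_pos sigE; split; first by []. split; first by [].
exact: closure'.
Qed.

Definition pic (c : chang) : Cq :=
  match c with Eps k => if k == 0%N then Q0 else Qe | OneMinus _ => Q1 end.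
Lemma piE x : Cq_pi x = pic (val x).
Proof. by case: x => [[[|n]|n] Hx]. Qed.
Lemma piL c : in_Cp c -> Cq_pi (Cp_lift c) = pic c.
Proof. by move=> H; rewrite piE /Cp_lift insubdK. Qed.

Ltac fin2 := repeat (case: eqP => ?); first [done | exfalso; lia].

Lemma CpE : Cp_pos = PosSig
         (fun x y => Cp_lift (p_oplus (reduct sig') (val x) (val y)))
         (fun x y => Cp_lift (p_odot (reduct sig') (val x) (val y)))
         (fun x y => Cp_lift (p_join (reduct sig') (val x) (val y)))
         (fun x y => Cp_lift (p_meet (reduct sig') (val x) (val y)))
         Cp0 Cp1.
Proof. by rewrite /Cp_pos /chang_pos sigE. Qed.

Lemma hom_pi : pos_hom Cp_pos Cq_pos Cq_pi.
Proof.
rewrite /pos_hom /Cq_pos CpE /=.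
have cl (x y : Cp) := @closure' (val x) (val y) (valP x) (valP y).
split; [|split; [|split; [|split]]]; try done;
move=> x y; rewrite !piL;
try (by case: (cl x y)); try (by case: (cl (Cq_rep (Cq_pi x)) (Cq_rep (Cq_pi y))));
case: x => [[[|n]|n] /= Hx]; case: y => [[[|m]|m] /= Hy];
rewrite ?(eqP Hx) ?(eqP Hy) /= /mv_odot /mv_join /mv_meet /=; fin2.
Qed.


Lemma mv_idem (M : mvAlgebra) (a : M) :
  mv_oplus (mv_ops M) a a = a ->
  mv_neg (mv_ops M) (mv_oplus (mv_ops M) (mv_neg (mv_ops M) a) (mv_neg (mv_ops M) a))
    = mv_zero (mv_ops M) -> a = mv_zero (mv_ops M).
Proof.
move=> H1 H2; move: (mv_ax M); rewrite /MV_axioms => -[A1 [A2 [A3 [A4 [A5 A6]]]]].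
move: H1 H2 A1 A2 A3 A4 A5 A6. case: (mv_ops M) => op ng z /= H1 H2 A1 A2 A3 A4 A5 A6.
have S1 : op (ng a) (ng a) = ng z by rewrite -H2 A4.
have S2 : op (ng a) a = ng z.
  have := A6 a (ng z). rewrite A5 A4 (A2 z a) A3 => <-. by [].
have := A6 (ng a) a. rewrite A4 H1 S2 S1 A4 (A2 z (ng a)) A3 => E.
by rewrite -(A4 a) -E A4.
Qed.

Lemma theta_iff x y : theta x y <-> Cq_pi x = Cq_pi y.
Proof.
rewrite !piE /theta.
case: x => [[[|n]|n] /= Hx]; case: y => [[[|m]|m] /= Hy]; split;
rewrite ?(eqP Hx) ?(eqP Hy) //=;
try (case => [[E1 E2]|[[k [l [Hk [Hl [E1 E2]]]]]|[E1 E2]]]; move: E1 E2 => //= [] ? [] ?; subst; by []);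
move=> E; try discriminate;
first [by left | by right; right | by right; left; exists n.+1, m.+1].
Qed.

Lemma cong_theta : pos_congruence Cp_pos theta.
Proof.
have [h1 [h2 [h3 [h4 _]]]] := hom_pi.
split; first by move=> x; apply/theta_iff.
split; first by move=> x y /theta_iff H; apply/theta_iff.
split; first by move=> x y w /theta_iff H1 /theta_iff H2; apply/theta_iff; rewrite H1.
split; first by move=> x x' y y' /theta_iff H1 /theta_iff H2; apply/theta_iff; rewrite !h1 H1 H2.
split; first by move=> x x' y y' /theta_iff H1 /theta_iff H2; apply/theta_iff; rewrite !h2 H1 H2.
split; first by move=> x x' y y' /theta_iff H1 /theta_iff H2; apply/theta_iff; rewrite !h3 H1 H2.
by move=> x x' y y' /theta_iff H1 /theta_iff H2; apply/theta_iff; rewrite !h4 H1 H2.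
Qed.

Lemma Cp_positive : is_positive Cp_pos.
Proof.
exists (MvAlgebra mv_ax_chang), val; split; first exact: val_inj.
have H : pos_hom Cp_pos (reduct sig') val.
  rewrite CpE /pos_hom /=.
  have cl (x y : Cp) := @closure' (val x) (val y) (valP x) (valP y).
  split; [|split; [|split; [|split]]]; try done;
  move=> x y; rewrite /Cp_lift insubdK //; by case: (cl x y).
rewrite -sigE in H. exact: H.
Qed.

Lemma Cq_not_positive : ~ is_positive Cq_pos.
Proof.
move=> [M [f [finj [h1 [h2 [h3 [h4 [h5 h6]]]]]]]].
have q1 : p_oplus Cq_pos Qe Qe = Qe by rewrite /Cq_pos CpE /= piL.
have q2 : p_odot Cq_pos Qe Qe = Q0 by rewrite /Cq_pos CpE /= piL.
have E1 := h1 Qe Qe. rewrite q1 /= in E1.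
have E2 := h2 Qe Qe. rewrite q2 /= h5 /mv_odot in E2.
have E := @mv_idem M (f Qe) (esym E1) (esym E2).
have E3 : f Qe = f Q0 by rewrite E h5.
by move/finj: E3.
Qed.

Theorem mainTheorem8 :
  (* C is an MV-algebra *)
  MV_axioms chang_sig /\
  (* C' is closed under oplus, odot, join, meet, 0, 1 of C *)
  (in_Cp (p_zero chang_pos) /\ in_Cp (p_one chang_pos) /\
   forall x y, in_Cp x -> in_Cp y ->
     [/\ in_Cp (p_oplus chang_pos x y), in_Cp (p_odot chang_pos x y),
         in_Cp (p_join chang_pos x y) & in_Cp (p_meet chang_pos x y)]) /\
  (* hence C' is a positive MV-algebra *)
  is_positive Cp_pos /\
  (* theta is a congruence of C' *)
  pos_congruence Cp_pos theta /\
  (* Cq is the quotient C'/theta: its elements are the theta-classes and the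
     canonical projection is a surjective homomorphism *)
  (forall x y, theta x y <-> Cq_pi x = Cq_pi y) /\
  (forall q, exists x, Cq_pi x = q) /\
  pos_hom Cp_pos Cq_pos Cq_pi /\
  (* C'/theta is not a positive MV-algebra *)
  ~ is_positive Cq_pos.
Proof.
split; first exact: mv_ax_chang.
split; first exact: closure.
split; first exact: Cp_positive.
split; first exact: cong_theta.
split; first exact: theta_iff.
split; first by case; [exists Cp0 | exists (exist _ (Eps 1) isT) | exists Cp1].
split; first exact: hom_pi.
exact: Cq_not_positive.
Qed.
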